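(* If $(A,W)$ is a Pratt comonoid such that $W$ is closed under complementation in $A$, then $W$ is closed under forming arbitrary unions, and also under forming arbitrary intersections.
   Context: A Pratt comonoid is a pair $(A,W)$ where $A$ is a set and $W$ is a set of subsets of $A$ such that (i) $\emptyset\in W$ and $A\in W$; (ii) whenever $C\subseteq A\times A$ is such that for every $a\in A$ both the $a$-th row $\{b\mid (a,b)\in C\}$ and the $a$-th column $\{b\mid (b,a)\in C\}$ belong to $W$ (a crossword over $W$), the diagonal $\{b\mid (b,b)\in C\}$ also belongs to $W$. *)

(* Defs.v *)
From mathcomp Require Import all_boot.
From mathcomp Require Import boolp classical_sets.
Set Implicit Arguments. Unset Strict Implicit. Unset Printing Implicit Defensive.
Local Open Scope classical_set_scope.

Definition row {A : Type} (C : set (A * A)) (a : A) : set A := [set b | C (a, b)].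
Definition col {A : Type} (C : set (A * A)) (a : A) : set A := [set b | C (b, a)].
Definition diag {A : Type} (C : set (A * A)) : set A := [set b | C (b, b)].

Definition crossword {A : Type} (W : set (set A)) (C : set (A * A)) : Prop :=
  forall a : A, W (row C a) /\ W (col C a).

Definition pratt_comonoid {A : Type} (W : set (set A)) : Prop :=
  W set0 /\ W setT /\
  (forall C : set (A * A), crossword W C -> W (diag C)).

(* Main.v *)
Require Import Defs.
From mathcomp Require Import all_boot.
From mathcomp Require Import boolp classical_sets.
Local Open Scope classical_set_scope.

Section Aux.
Variables (A : Type) (W : set (set A)).
Hypothesis HW : pratt_comonoid W.
Hypothesis HC : forall U : set A, W U -> W (~` U).

Lemma W0 : W set0. Proof. by case: HW. Qed.

Lemma WI (P Q : set A) : W P -> W Q -> W (P `&` Q).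
Proof.
move=> WP WQ; case: HW => _ [_ Hd].
have -> : P `&` Q = diag [set p | P p.1 /\ Q p.2] by [].
apply: Hd => a; split.
- have [Pa|nPa] := pselect (P a).
  + suff -> : row [set p | P p.1 /\ Q p.2] a = Q by [].
    by apply/seteqP; split => b /=; [case|].
  + suff -> : row [set p | P p.1 /\ Q p.2] a = set0 by exact: W0.
    by apply/seteqP; split => b /=; [case|].
- have [Qa|nQa] := pselect (Q a).
  + suff -> : col [set p | P p.1 /\ Q p.2] a = P by [].
    by apply/seteqP; split => b /=; [case|].
  + suff -> : col [set p | P p.1 /\ Q p.2] a = set0 by exact: W0.
    by apply/seteqP; split => b /=; [case|].
Qed.

Definition disj (G : set (set A)) :=
  forall X Y, G X -> G Y -> X <> Y -> X `&` Y = set0.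

Lemma Wdisj (G : set (set A)) : G `<=` W -> disj G -> W (\bigcup_(V in G) V).
Proof.
move=> GW dG; case: HW => _ [_ Hd].
pose C := [set p : A * A | exists2 V, G V & V p.1 /\ V p.2].
have -> : \bigcup_(V in G) V = diag C.
  by apply/seteqP; split => x /=; [case=> V GV Vx; exists V|case=> V GV []; exists V].
have rowE a : row C a = col C a.
  by apply/seteqP; split => b /= [V GV [? ?]]; exists V.
suff Hr a : W (row C a) by apply: Hd => a; split; [exact: Hr|rewrite -rowE; exact: Hr].
have [[V GV Va]|nex] := pselect (exists2 V, G V & V a).
- suff -> : row C a = V by exact: GW.
  apply/seteqP; split => b /=.
  + case=> V' GV' [V'a V'b].
    have [E|neq] := pselect (V' = V); first by rewrite -E.
    by have := dG _ _ GV' GV neq; move/seteqP => [/(_ a) /= H _]; case: (H (conj V'a Va)).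
  + by move=> Vb; exists V.
- suff -> : row C a = set0 by exact: W0.
  apply/seteqP; split => b //= [V GV [Va _]]; apply: nex; by exists V.
Qed.

Lemma Wunion (F : set (set A)) : F `<=` W -> W (\bigcup_(U in F) U).
Proof.
move=> FW; set S := \bigcup_(U in F) U.
pose P := fun G : set (set A) => G `<=` [set V | W V /\ V `<=` S] /\ disj G.
have chainP : forall GG : set (set (set A)), GG `<=` P -> total_on GG subset ->
    P (\bigcup_(X in GG) X).
  move=> GG GGP tot; split.
  - by move=> V [G GGG GV]; apply: (GGP _ GGG).1.
  - move=> X Y [G1 g1 X1] [G2 g2 Y2] neq.
    have [s12|s21] := tot _ _ g1 g2.
    + exact: (GGP _ g2).2 (s12 _ X1) Y2 neq.
    + exact: (GGP _ g1).2 X1 (s21 _ Y2) neq.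
have [G [[GW dG] maxG]] := Zorn_bigcup chainP.
set Z := \bigcup_(V in G) V.
have WZ : W Z by apply: Wdisj => // V /GW [].
have ZS : Z `<=` S by move=> x [V GV Vx]; exact: (GW _ GV).2.
suff -> : S = Z by [].
apply/seteqP; split => // x Sx.
apply/not_notP => nZx.
case: Sx => U FU Ux.
pose V0 := U `&` ~` Z.
have WV0 : W V0 by apply: WI; [exact: FW|exact: HC].
have V0x : V0 x by split.
have V0Z : forall V, G V -> V `&` V0 = set0.
  move=> V GV; apply/seteqP; split => // y [Vy [_ nZy]]; apply: nZy; by exists V.
apply: (maxG (G `|` [set V0])).
- split; first by move=> V GV; left.
  move=> E; have GV0 : G V0 by apply: E; right.
  by apply: nZx; exists V0.
- split.
  + move=> V [GV|->]; first exact: GW.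
    by split => // y [Uy _]; exists U.
  + move=> X Y [GX|->] [GY|->] neq //.
    * exact: dG.
    * exact: V0Z.
    * by rewrite setIC; apply: V0Z.
Qed.
End Aux.

Theorem corollary4p3 (A : Type) (W : set (set A)) :
  pratt_comonoid W ->
  (forall U : set A, W U -> W (~` U)) ->
  (forall F : set (set A), F `<=` W -> W (\bigcup_(U in F) U)) /\
  (forall F : set (set A), F `<=` W -> W (\bigcap_(U in F) U)).
Proof.
move=> HW HC; split; first by move=> F FW; exact: (@Wunion _ _ HW HC _ FW).
move=> F FW.
have -> : \bigcap_(U in F) U = ~` \bigcup_(U in [set ~` V | V in F]) U.
  by rewrite bigcup_image -setC_bigcap setCK.
apply: (HC _); apply: (@Wunion _ _ HW HC) => X [V FV <-]; exact: HC (FW _ FV).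
Qed.
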